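(* Let $\alpha>0$. Let $u$ be a quasi-subharmonic function on a neighborhood of the closed disc $\overline{\mathbb{D}(-1,3)}\subset\mathbb{C}$ such that $\Delta u\ge-1$ and $u\le1$ on $\overline{\mathbb{D}(-1,3)}$, and $u(z)\le|z|^\alpha$ for all $z\in\overline{\mathbb{D}(1,1)}$. Then there is a constant $c>0$ depending only on $\alpha$ such that for all real $t\in[-1/2,0)$: $u(t)\le c|t|^{\min(1,\alpha)}$ if $\alpha\ne1$, and $u(t)\le -c|t|\log|t|$ if $\alpha=1$ (and $u(0)\le0$).
   Context: $\mathbb{D}(w,r)$ denotes the open disc of center $w$ and radius $r$ in $\mathbb{C}$; $\Delta$ is the Laplacian on $\mathbb{C}$, and $\Delta u\ge-1$ is understood in the sense of distributions. *)

(* Defs.v *)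
From Stdlib Require Import Reals Lra.
Open Scope R_scope.

(* Values in [-oo, +oo) : subharmonic functions may take the value -oo. *)
Inductive ER : Type := Fin : R -> ER | NInf : ER.

Definition ER_le (e : ER) (a : R) : Prop :=
  match e with Fin x => x <= a | NInf => True end.
Definition ER_lt (e : ER) (a : R) : Prop :=
  match e with Fin x => x < a | NInf => True end.
Definition ER_addR (e : ER) (a : R) : ER :=
  match e with Fin x => Fin (x + a) | NInf => NInf end.

Definition dist2 (x y x' y' : R) : R := (x - x') ^ 2 + (y - y') ^ 2.

Definition cdisc (cx cy r x y : R) : Prop := dist2 x y cx cy <= r ^ 2.
Definition odisc (cx cy r x y : R) : Prop := dist2 x y cx cy < r ^ 2.

Definition open_set (U : R -> R -> Prop) : Prop :=
  forall x y, U x y -> exists d, 0 < d /\ forall x' y', dist2 x' y' x y < d ^ 2 -> U x' y'.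

Definition usc_on (U : R -> R -> Prop) (v : R -> R -> ER) : Prop :=
  forall x y, U x y -> forall a, ER_lt (v x y) a ->
    exists d, 0 < d /\ forall x' y', U x' y' -> dist2 x' y' x y < d ^ 2 -> ER_lt (v x' y') a.

Definition cont_on (S : R -> R -> Prop) (h : R -> R -> R) : Prop :=
  forall x y, S x y -> forall eps, 0 < eps ->
    exists d, 0 < d /\ forall x' y', S x' y' -> dist2 x' y' x y < d ^ 2 ->
      Rabs (h x' y' - h x y) < eps.

Definition harmonic_on (S : R -> R -> Prop) (h : R -> R -> R) : Prop :=
  exists hx hy hxx hyy : R -> R -> R,
    forall x y, S x y ->
      derivable_pt_lim (fun s => h s y) x (hx x y) /\
      derivable_pt_lim (fun s => h x s) y (hy x y) /\
      derivable_pt_lim (fun s => hx s y) x (hxx x y) /\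
      derivable_pt_lim (fun s => hy x s) y (hyy x y) /\
      hxx x y + hyy x y = 0.

Definition subharmonic_on (U : R -> R -> Prop) (v : R -> R -> ER) : Prop :=
  open_set U /\ usc_on U v /\
  forall cx cy r, 0 < r -> (forall x y, cdisc cx cy r x y -> U x y) ->
    forall h : R -> R -> R,
      cont_on (cdisc cx cy r) h -> harmonic_on (odisc cx cy r) h ->
      (forall x y, dist2 x y cx cy = r ^ 2 -> ER_le (v x y) (h x y)) ->
      forall x y, cdisc cx cy r x y -> ER_le (v x y) (h x y).

(* u quasi-subharmonic on U with Delta u >= -1 (distributions)
   <=> u + |z|^2/4 is subharmonic on U  (Delta(|z|^2/4) = 1). *)
Definition qsh_lap_ge_m1 (U : R -> R -> Prop) (u : R -> R -> ER) : Prop :=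
  subharmonic_on U (fun x y => ER_addR (u x y) ((x ^ 2 + y ^ 2) / 4)).

Definition rpow (r a : R) : R := if Rle_dec r 0 then 0 else Rpower r a.

Definition modz (x y : R) : R := sqrt (x ^ 2 + y ^ 2).

(* Main.v *)
Require Import Defs.
From Stdlib Require Import Reals Lra Psatz Classical.
From Coquelicot Require Import Coquelicot.
Open Scope R_scope.

Definition pc (h : R -> R -> R) (x y : R) : Prop :=
  continuous (fun p : R * R => h (fst p) (snd p)) (x, y).

Lemma pc_cont_on (S : R -> R -> Prop) h :
  (forall x y, S x y -> pc h x y) -> cont_on S h.
Proof.
  intros H x y Sxy eps Heps.
  specialize (H x y Sxy). unfold pc in H.
  apply filterlim_locally with (eps := mkposreal eps Heps) in H.
  destruct H as [d Hd].
  exists d. split. apply cond_pos.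
  intros x' y' _ Hdist.
  assert (Hx : Rabs (x' - x) < d).
  { destruct d as [d dp]; simpl in *. unfold dist2 in Hdist.
    assert (Hq : (x' - x) ^ 2 < d ^ 2) by (pose proof (pow2_ge_0 (y' - y)); lra).
    apply Rabs_def1.
    - destruct (Rlt_or_le (x' - x) d); auto. nra.
    - destruct (Rlt_or_le (- d) (x' - x)); auto. nra. }
  assert (Hy : Rabs (y' - y) < d).
  { destruct d as [d dp]; simpl in *. unfold dist2 in Hdist.
    assert (Hq : (y' - y) ^ 2 < d ^ 2) by (pose proof (pow2_ge_0 (x' - x)); lra).
    apply Rabs_def1.
    - destruct (Rlt_or_le (y' - y) d); auto. nra.
    - destruct (Rlt_or_le (- d) (y' - y)); auto. nra. }
  specialize (Hd (x', y')). simpl in Hd.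
  assert (B : ball (x, y) d (x', y')).
  { split; simpl; unfold ball; simpl; unfold AbsRing_ball; simpl; [exact Hx | exact Hy]. }

  specialize (Hd B). unfold ball in Hd; simpl in Hd; unfold AbsRing_ball in Hd;
  simpl in Hd; unfold minus, plus, opp, abs in Hd; simpl in Hd. exact Hd.
Qed.

Lemma harm_sub (W V : R -> R -> Prop) h :
  harmonic_on W h -> (forall x y, V x y -> W x y) -> harmonic_on V h.
Proof.
  intros [hx [hy [hxx [hyy H]]]] HVW.
  exists hx, hy, hxx, hyy. intros x y Vxy. apply H, HVW, Vxy.
Qed.

Lemma harm_lin (W : R -> R -> Prop) h1 h2 c1 c2 :
  harmonic_on W h1 -> harmonic_on W h2 ->
  harmonic_on W (fun x y => c1 * h1 x y + c2 * h2 x y).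
Proof.
  intros [hx1 [hy1 [hxx1 [hyy1 H1]]]] [hx2 [hy2 [hxx2 [hyy2 H2]]]].
  exists (fun x y => c1 * hx1 x y + c2 * hx2 x y),
         (fun x y => c1 * hy1 x y + c2 * hy2 x y),
         (fun x y => c1 * hxx1 x y + c2 * hxx2 x y),
         (fun x y => c1 * hyy1 x y + c2 * hyy2 x y).
  intros x y Wxy.
  destruct (H1 x y Wxy) as [A1 [B1 [C1 [D1 E1]]]].
  destruct (H2 x y Wxy) as [A2 [B2 [C2 [D2 E2]]]].
  repeat split.
  - apply derivable_pt_lim_plus; apply derivable_pt_lim_scal; assumption.
  - apply derivable_pt_lim_plus; apply derivable_pt_lim_scal; assumption.
  - apply (derivable_pt_lim_plus (fun s => c1 * hx1 s y) (fun s => c2 * hx2 s y));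
      apply derivable_pt_lim_scal; assumption.
  - apply (derivable_pt_lim_plus (fun s => c1 * hy1 x s) (fun s => c2 * hy2 x s));
      apply derivable_pt_lim_scal; assumption.
  - nra.
Qed.

Lemma harm_aff (W : R -> R -> Prop) k0 k1 k2 :
  harmonic_on W (fun x y => k0 + k1 * x + k2 * y).
Proof.
  exists (fun _ _ => k1), (fun _ _ => k2), (fun _ _ => 0), (fun _ _ => 0).
  intros x y _. repeat split.
  - apply is_derive_Reals. auto_derive; auto. ring.
  - apply is_derive_Reals. auto_derive; auto. ring.
  - apply is_derive_Reals. auto_derive; auto.
  - apply is_derive_Reals. auto_derive; auto.
  - ring.
Qed.

Lemma pc_lin h1 h2 c1 c2 x y : pc h1 x y -> pc h2 x y ->
  pc (fun x y => c1 * h1 x y + c2 * h2 x y) x y.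
Proof.
  unfold pc; intros H1 H2.
  apply (continuous_plus (fun p : R*R => c1 * h1 (fst p) (snd p))
                         (fun p : R*R => c2 * h2 (fst p) (snd p))).
  - apply (continuous_scal_r c1 (fun p : R*R => h1 (fst p) (snd p))). exact H1.
  - apply (continuous_scal_r c2 (fun p : R*R => h2 (fst p) (snd p))). exact H2.
Qed.

Lemma pc_aff k0 k1 k2 x y : pc (fun x y => k0 + k1 * x + k2 * y) x y.
Proof.
  unfold pc.
  apply (continuous_plus (fun p : R*R => k0 + k1 * fst p) (fun p : R*R => k2 * snd p)).
  apply (continuous_plus (fun p : R*R => k0) (fun p : R*R => k1 * fst p)).
  apply continuous_const.
  apply (continuous_scal_r k1 (fun p : R*R => fst p)). apply continuous_fst.
  apply (continuous_scal_r k2 (fun p : R*R => snd p)). apply continuous_snd.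
Qed.

Lemma MP (U : R -> R -> Prop) (v : R -> R -> ER) (S I W : R -> R -> Prop)
  (h : R -> R -> R) (r M : R) :
  0 < r -> subharmonic_on U v ->
  (forall x y, S x y -> U x y) ->
  (forall px py, I px py -> forall x y, cdisc px py r x y -> S x y) ->
  (forall x y, S x y -> W x y) ->
  harmonic_on W h ->
  (forall x y, S x y -> pc h x y) ->
  (forall x y, S x y -> ~ I x y -> ER_le (v x y) (h x y - (x^2 + y^2))) ->
  (forall x y, S x y -> ER_le (v x y) (h x y - (x^2 + y^2) + M)) ->
  forall x y, S x y -> ER_le (v x y) (h x y - (x^2 + y^2)).
Proof.
  intros Hr [_ [_ Hsub]] HSU HIS HSW Hh Hc Hlay HM.
  destruct (classic (exists x y w, S x y /\ v x y = Fin w /\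
                       w - h x y + (x^2 + y^2) > 0)) as [Ex | NEx].
  2:{ intros x y Sxy. destruct (v x y) as [w|] eqn:Ev; simpl; auto.
      destruct (Rle_or_lt w (h x y - (x^2+y^2))); auto.
      exfalso; apply NEx. exists x, y, w. repeat split; auto; lra. }
  exfalso.
  set (E := fun e => exists x y w, S x y /\ v x y = Fin w /\ e = w - h x y + (x^2 + y^2)).
  assert (bE : bound E).
  { exists M. intros e [x [y [w [Sxy [Ev ->]]]]]. specialize (HM x y Sxy).
    rewrite Ev in HM. simpl in HM. lra. }
  destruct Ex as [x0 [y0 [w0 [S0 [E0 P0]]]]].
  assert (nE : exists e, E e) by (exists (w0 - h x0 y0 + (x0^2+y0^2)); exists x0, y0, w0; auto).
  destruct (completeness E bE nE) as [m [mub mlub]].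
  assert (mpos : m > 0).
  { assert (w0 - h x0 y0 + (x0^2+y0^2) <= m) by (apply mub; exists x0, y0, w0; auto). lra. }
  set (dl := Rmin m (r^2)).
  assert (dlpos : 0 < dl) by (unfold dl; apply Rmin_pos; nra).
  assert (Hex : exists e, E e /\ e > m - dl).
  { apply NNPP. intro N. assert (m <= m - dl); [|lra].
    apply mlub. intros e Ee. destruct (Rle_or_lt e (m - dl)); auto.
    exfalso; apply N; exists e; auto. }
  destruct Hex as [e [[px [py [w [Sp [Ev ->]]]]] He]].
  assert (dlm : dl <= m) by apply Rmin_l.
  assert (dlr : dl <= r^2) by apply Rmin_r.
  assert (Ip : I px py).
  { apply NNPP; intro N. specialize (Hlay px py Sp N). rewrite Ev in Hlay.
    simpl in Hlay. lra. }
  set (hs := fun x y => 1 * h x y + 1 * ((- (px^2+py^2) - r^2 + m + 2*px*px + 2*py*py)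
                         + (-2*px) * x + (-2*py) * y)).
  assert (Hd := Hsub px py r Hr).
  assert (HdU : forall x y, cdisc px py r x y -> U x y) by eauto.
  specialize (Hd HdU hs).
  assert (Hcs : cont_on (cdisc px py r) hs).
  { apply pc_cont_on. intros x y Cxy. unfold hs.
    apply pc_lin. apply Hc; eauto. apply pc_aff. }
  assert (Hhs : harmonic_on (odisc px py r) hs).
  { unfold hs. apply harm_lin. apply (harm_sub W). exact Hh.
    intros x y O. apply HSW, (HIS px py Ip). unfold cdisc, odisc in *; lra.
    apply harm_aff. }
  specialize (Hd Hcs Hhs).
  assert (Hbd : forall x y, dist2 x y px py = r ^ 2 -> ER_le (v x y) (hs x y)).
  { intros x y Dxy. assert (Sxy : S x y) by (apply (HIS px py Ip); unfold cdisc; lra).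
    destruct (v x y) as [w'|] eqn:Ev'; simpl; auto.
    assert (w' - h x y + (x^2+y^2) <= m) by (apply mub; exists x, y, w'; auto).
    unfold hs. unfold dist2 in Dxy. nra. }
  specialize (Hd Hbd px py).
  assert (Cp : cdisc px py r px py) by (unfold cdisc, dist2; nra).
  specialize (Hd Cp). rewrite Ev in Hd. simpl in Hd. unfold hs in Hd. nra.
Qed.

Definition Ff (g a b : R) := Rpower (a^2 + b^2) (g/2) * cos (g * atan (b/a)).
Definition Gf (g a b : R) := Rpower (a^2 + b^2) (g/2) * sin (g * atan (b/a)).

Lemma cos_atan_ab a b : 0 < a -> cos (atan (b/a)) = a / sqrt (a^2+b^2).
Proof.
  intros Ha. rewrite cos_atan.
  assert (E : 1 + (b/a)² = (a^2+b^2) / a^2) by (unfold Rsqr; field; lra).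
  rewrite E, sqrt_div_alt by nra. rewrite sqrt_pow2 by lra.
  assert (0 < sqrt (a^2+b^2)) by (apply sqrt_lt_R0; nra). field; lra.
Qed.

Lemma sin_atan_ab a b : 0 < a -> sin (atan (b/a)) = b / sqrt (a^2+b^2).
Proof.
  intros Ha. rewrite sin_atan.
  assert (E : 1 + (b/a)² = (a^2+b^2) / a^2) by (unfold Rsqr; field; lra).
  rewrite E, sqrt_div_alt by nra. rewrite sqrt_pow2 by lra.
  assert (0 < sqrt (a^2+b^2)) by (apply sqrt_lt_R0; nra). field; lra.
Qed.

Lemma Rpower_half_split q g : 0 < q ->
  Rpower q (g/2) = Rpower q ((g-1)/2) * sqrt q.
Proof.
  intros Hq. rewrite <- Rpower_sqrt by auto. rewrite <- Rpower_plus. f_equal. field.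
Qed.

Lemma Rpower_half_split' q g : 0 < q ->
  Rpower q (g/2 - 1) = Rpower q ((g-1)/2) / sqrt q.
Proof.
  intros Hq. assert (0 < sqrt q) by (apply sqrt_lt_R0; auto).
  assert (Rpower q (g/2 - 1) * sqrt q = Rpower q ((g - 1) / 2)).
  { rewrite <- Rpower_sqrt by auto. rewrite <- Rpower_plus. f_equal. field. }
  rewrite <- H0. field. lra.
Qed.

Lemma dcomp (f g : R -> R) x l1 l2 :
  derivable_pt_lim f x l1 -> derivable_pt_lim g (f x) l2 ->
  derivable_pt_lim (fun s => g (f s)) x (l2 * l1).
Proof. intros. apply (derivable_pt_lim_comp f g); auto. Qed.

Lemma dq (fa fb : R -> R) t da db :
  derivable_pt_lim fa t da -> derivable_pt_lim fb t db ->
  derivable_pt_lim (fun s => fa s ^ 2 + fb s ^ 2) t (2*fa t*da + 2*fb t*db).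
Proof.
  intros Da Db.
  replace (2*fa t*da + 2*fb t*db) with ((INR 2 * fa t ^ 1) * da + (INR 2 * fb t ^ 1) * db)
    by (simpl; ring).
  apply (derivable_pt_lim_plus (fun s => fa s ^ 2) (fun s => fb s ^ 2));
  apply (dcomp _ (fun x => x ^ 2)); auto; apply derivable_pt_lim_pow.
Qed.

Lemma dth (fa fb : R -> R) t da db :
  0 < fa t -> derivable_pt_lim fa t da -> derivable_pt_lim fb t db ->
  derivable_pt_lim (fun s => atan (fb s / fa s)) t
    ((fa t * db - fb t * da) / (fa t ^ 2 + fb t ^ 2)).
Proof.
  intros Ha Da Db.
  assert (H := derivable_pt_lim_div fb fa t db da Db Da ltac:(lra)).
  assert (H2 := dcomp _ atan t _ _ H (derivable_pt_lim_atan (fb t / fa t))).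
  replace ((fa t * db - fb t * da) / (fa t ^ 2 + fb t ^ 2)) with
    (/ (1 + (fb t / fa t) ^ 2) * ((db * fa t - da * fb t) / (fa t)²)).
  exact H2. unfold Rsqr. field. split; [nra|lra].
Qed.

Lemma Ff_chain (fa fb : R -> R) t da db g :
  0 < fa t -> derivable_pt_lim fa t da -> derivable_pt_lim fb t db ->
  derivable_pt_lim (fun s => Ff g (fa s) (fb s)) t
    (g * (Ff (g-1) (fa t) (fb t) * da - Gf (g-1) (fa t) (fb t) * db)).
Proof.
  intros Ha Da Db. unfold Ff, Gf.
  assert (Hq : 0 < fa t ^ 2 + fb t ^ 2) by nra.
  assert (D1 := dcomp _ (fun x => Rpower x (g/2)) t _ _ (dq fa fb t da db Da Db)
                  (derivable_pt_lim_power _ (g/2) Hq)).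
  assert (D2 := dcomp _ (fun x => cos (g * x)) t _ _ (dth fa fb t da db Ha Da Db)
                  (dcomp (fun x => g * x) cos _ _ _
                    (derivable_pt_lim_scal id g _ 1 (derivable_pt_lim_id _))
                    (derivable_pt_lim_cos _))).
  assert (D := derivable_pt_lim_mult _ _ t _ _ D1 D2). simpl in D.
  match goal with |- derivable_pt_lim _ _ ?l => match type of D with
    derivable_pt_lim _ _ ?l' => replace l with l'; [exact D|] end end.
  set (a := fa t) in *. set (b := fb t) in *. unfold id.
  replace (a * (a * 1) + b * (b * 1)) with (a^2+b^2) by ring.
  rewrite Rpower_half_split' by auto.
  rewrite (Rpower_half_split _ g) by auto.
  replace ((g-1) * atan (b/a)) with (g * atan (b/a) - atan (b/a)) by ring.
  rewrite cos_minus, sin_minus, cos_atan_ab, sin_atan_ab by auto.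
  set (P := Rpower (a^2+b^2) ((g-1)/2)).
  set (C := cos (g * atan (b / a))). set (S := sin (g * atan (b / a))).
  assert (Hs : 0 < sqrt (a^2+b^2)) by (apply sqrt_lt_R0; auto).
  assert (Hss : sqrt (a^2+b^2) * sqrt (a^2+b^2) = a^2+b^2) by (apply sqrt_sqrt; lra).
  set (sq := sqrt (a^2+b^2)) in *.
  rewrite <- Hss. field. lra.
Qed.

Lemma Gf_chain (fa fb : R -> R) t da db g :
  0 < fa t -> derivable_pt_lim fa t da -> derivable_pt_lim fb t db ->
  derivable_pt_lim (fun s => Gf g (fa s) (fb s)) t
    (g * (Gf (g-1) (fa t) (fb t) * da + Ff (g-1) (fa t) (fb t) * db)).
Proof.
  intros Ha Da Db. unfold Ff, Gf.
  assert (Hq : 0 < fa t ^ 2 + fb t ^ 2) by nra.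
  assert (D1 := dcomp _ (fun x => Rpower x (g/2)) t _ _ (dq fa fb t da db Da Db)
                  (derivable_pt_lim_power _ (g/2) Hq)).
  assert (D2 := dcomp _ (fun x => sin (g * x)) t _ _ (dth fa fb t da db Ha Da Db)
                  (dcomp (fun x => g * x) sin _ _ _
                    (derivable_pt_lim_scal id g _ 1 (derivable_pt_lim_id _))
                    (derivable_pt_lim_sin _))).
  assert (D := derivable_pt_lim_mult _ _ t _ _ D1 D2). simpl in D.
  match goal with |- derivable_pt_lim _ _ ?l => match type of D with
    derivable_pt_lim _ _ ?l' => replace l with l'; [exact D|] end end.
  set (a := fa t) in *. set (b := fb t) in *. unfold id.
  replace (a * (a * 1) + b * (b * 1)) with (a^2+b^2) by ring.
  rewrite Rpower_half_split' by auto.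
  rewrite (Rpower_half_split _ g) by auto.
  replace ((g-1) * atan (b/a)) with (g * atan (b/a) - atan (b/a)) by ring.
  rewrite cos_minus, sin_minus, cos_atan_ab, sin_atan_ab by auto.
  set (P := Rpower (a^2+b^2) ((g-1)/2)).
  set (C := cos (g * atan (b / a))). set (S := sin (g * atan (b / a))).
  assert (Hs : 0 < sqrt (a^2+b^2)) by (apply sqrt_lt_R0; auto).
  assert (Hss : sqrt (a^2+b^2) * sqrt (a^2+b^2) = a^2+b^2) by (apply sqrt_sqrt; lra).
  set (sq := sqrt (a^2+b^2)) in *.
  rewrite <- Hss. field. lra.
Qed.

Definition Lf (a b : R) := -(a/2) * ln (a^2+b^2) + b * atan (b/a).
Definition Lx (a b : R) := -(ln (a^2+b^2)/2 + 1).

Lemma Lf_chain (fa fb : R -> R) t da db :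
  0 < fa t -> derivable_pt_lim fa t da -> derivable_pt_lim fb t db ->
  derivable_pt_lim (fun s => Lf (fa s) (fb s)) t
    (Lx (fa t) (fb t) * da + atan (fb t / fa t) * db).
Proof.
  intros Ha Da Db. unfold Lf, Lx.
  assert (Hq : 0 < fa t ^ 2 + fb t ^ 2) by nra.
  assert (D1 := dcomp _ ln t _ _ (dq fa fb t da db Da Db) (derivable_pt_lim_ln _ Hq)).
  assert (D2 := dth fa fb t da db Ha Da Db).
  assert (Da' := derivable_pt_lim_scal fa (-/2) t da Da).
  assert (P1 := derivable_pt_lim_mult _ _ t _ _ Da' D1).
  assert (P2 := derivable_pt_lim_mult _ _ t _ _ Db D2).
  assert (P := derivable_pt_lim_plus _ _ t _ _ P1 P2).
  match goal with |- derivable_pt_lim _ _ ?l => match type of P with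
    derivable_pt_lim _ _ ?l' => replace l with l' end end.
  - eapply derivable_pt_lim_ext; [|exact P]. intros s; unfold mult_real_fct, mult_fct, plus_fct, fct_cte. simpl. field.
  - unfold mult_real_fct. field. nra.
Qed.

Lemma Lx_chain (fa fb : R -> R) t da db :
  0 < fa t -> derivable_pt_lim fa t da -> derivable_pt_lim fb t db ->
  derivable_pt_lim (fun s => Lx (fa s) (fb s)) t
    (- ((fa t * da + fb t * db) / (fa t ^ 2 + fb t ^ 2))).
Proof.
  intros Ha Da Db. unfold Lx.
  assert (Hq : 0 < fa t ^ 2 + fb t ^ 2) by nra.
  assert (D1 := dcomp _ ln t _ _ (dq fa fb t da db Da Db) (derivable_pt_lim_ln _ Hq)).
  assert (D2 := derivable_pt_lim_scal _ (-/2) t _ D1).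
  assert (D3 := derivable_pt_lim_plus _ _ t _ _ D2 (derivable_pt_lim_const (-1) t)).
  match goal with |- derivable_pt_lim _ _ ?l => match type of D3 with
    derivable_pt_lim _ _ ?l' => replace l with l' end end.
  - eapply derivable_pt_lim_ext; [|exact D3]. intros s; unfold mult_real_fct, plus_fct. unfold fct_cte; simpl. field.
  - field. nra.
Qed.

Definition Dd x y := (x-2)^2 + y^2.
Definition ma k x y := k + 2 + 4*(x-2)/Dd x y.
Definition mb x y := -4*y/Dd x y.
Definition mx x y := 4*(y^2 - (x-2)^2)/(Dd x y)^2.
Definition mbx x y := 8*(x-2)*y/(Dd x y)^2.
Definition mxx x y := 8*((x-2)^3 - 3*(x-2)*y^2)/(Dd x y)^3.
Definition mbxx x y := 8*(y^3 - 3*(x-2)^2*y)/(Dd x y)^3.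

Ltac nz := repeat split; try apply Rgt_not_eq; unfold Dd in *; nra.
Ltac dd := apply is_derive_Reals; auto_derive; [nz | unfold Dd in *; field; nz].

Lemma d_ma_x k x y : 0 < Dd x y -> derivable_pt_lim (fun s => ma k s y) x (mx x y).
Proof. intros H. unfold ma, mx, Dd in *. dd. Qed.
Lemma d_mb_x x y : 0 < Dd x y -> derivable_pt_lim (fun s => mb s y) x (mbx x y).
Proof. intros H. unfold mb, mbx, Dd in *. dd. Qed.
Lemma d_ma_y k x y : 0 < Dd x y -> derivable_pt_lim (fun s => ma k x s) y (- mbx x y).
Proof. intros H. unfold ma, mbx, Dd in *. dd. Qed.
Lemma d_mb_y x y : 0 < Dd x y -> derivable_pt_lim (fun s => mb x s) y (mx x y).
Proof. intros H. unfold mb, mx, Dd in *. dd. Qed.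
Lemma d_mx_x x y : 0 < Dd x y -> derivable_pt_lim (fun s => mx s y) x (mxx x y).
Proof. intros H. unfold mx, mxx, Dd in *. dd. Qed.
Lemma d_mbx_x x y : 0 < Dd x y -> derivable_pt_lim (fun s => mbx s y) x (mbxx x y).
Proof. intros H. unfold mbx, mbxx, Dd in *. dd. Qed.
Lemma d_mbx_y x y : 0 < Dd x y -> derivable_pt_lim (fun s => mbx x s) y (mxx x y).
Proof. intros H. unfold mbx, mxx, Dd in *. dd. Qed.
Lemma d_mx_y x y : 0 < Dd x y -> derivable_pt_lim (fun s => mx x s) y (- mbxx x y).
Proof. intros H. unfold mx, mbxx, Dd in *. dd. Qed.

Definition Wk k x y := 0 < Dd x y /\ 0 < ma k x y.

Lemma d4m (f1 f2 f3 f4 : R -> R) x l1 l2 l3 l4 c :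
  derivable_pt_lim f1 x l1 -> derivable_pt_lim f2 x l2 ->
  derivable_pt_lim f3 x l3 -> derivable_pt_lim f4 x l4 ->
  derivable_pt_lim (fun s => c * (f1 s * f2 s - f3 s * f4 s)) x
    (c * ((l1 * f2 x + f1 x * l2) - (l3 * f4 x + f3 x * l4))).
Proof.
  intros D1 D2 D3 D4.
  apply (derivable_pt_lim_scal (fun s => f1 s * f2 s - f3 s * f4 s)).
  apply (derivable_pt_lim_minus (fun s => f1 s * f2 s) (fun s => f3 s * f4 s));
  apply derivable_pt_lim_mult; auto.
Qed.

Lemma d4p (f1 f2 f3 f4 : R -> R) x l1 l2 l3 l4 :
  derivable_pt_lim f1 x l1 -> derivable_pt_lim f2 x l2 ->
  derivable_pt_lim f3 x l3 -> derivable_pt_lim f4 x l4 ->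
  derivable_pt_lim (fun s => f1 s * f2 s + f3 s * f4 s) x
    ((l1 * f2 x + f1 x * l2) + (l3 * f4 x + f3 x * l4)).
Proof.
  intros D1 D2 D3 D4.
  apply (derivable_pt_lim_plus (fun s => f1 s * f2 s) (fun s => f3 s * f4 s));
  apply derivable_pt_lim_mult; auto.
Qed.

Lemma dneg (f : R -> R) x l : derivable_pt_lim f x l ->
  derivable_pt_lim (fun s => - f s) x (- l).
Proof. intros D. apply (derivable_pt_lim_opp f). auto. Qed.

Lemma harm_ma k : harmonic_on (Wk k) (fun x y => ma k x y).
Proof.
  exists mx, (fun x y => - mbx x y), mxx, (fun x y => - mxx x y).
  intros x y [HD Ha]. repeat split.
  - apply d_ma_x; auto.
  - apply d_ma_y; auto.
  - apply d_mx_x; auto.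
  - apply (dneg (fun s => mbx x s)). apply d_mbx_y; auto.
  - ring.
Qed.

Lemma harm_Ff g k : harmonic_on (Wk k) (fun x y => Ff g (ma k x y) (mb x y)).
Proof.
  set (A := fun g' x y => Ff g' (ma k x y) (mb x y)).
  set (B := fun g' x y => Gf g' (ma k x y) (mb x y)).
  exists (fun x y => g * (A (g-1) x y * mx x y - B (g-1) x y * mbx x y)),
         (fun x y => g * (A (g-1) x y * (- mbx x y) - B (g-1) x y * mx x y)),
         (fun x y => g * (((g-1) * (A (g-1-1) x y * mx x y - B (g-1-1) x y * mbx x y)) * mx x y
                          + A (g-1) x y * mxx x y
                          - (((g-1) * (B (g-1-1) x y * mx x y + A (g-1-1) x y * mbx x y)) * mbx x y
                          + B (g-1) x y * mbxx x y))),
         (fun x y => g * (((g-1) * (A (g-1-1) x y * (- mbx x y) - B (g-1-1) x y * mx x y)) * (- mbx x y)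
                          + A (g-1) x y * (- mxx x y)
                          - (((g-1) * (B (g-1-1) x y * (- mbx x y) + A (g-1-1) x y * mx x y)) * mx x y
                          + B (g-1) x y * (- mbxx x y)))).
  intros x y [HD Ha]. unfold A, B.
  repeat split.
  - apply (Ff_chain (fun s => ma k s y) (fun s => mb s y)); auto.
    apply d_ma_x; auto. apply d_mb_x; auto.
  - apply (Ff_chain (fun s => ma k x s) (fun s => mb x s)); auto.
    apply d_ma_y; auto. apply d_mb_y; auto.
  - apply (d4m (fun s => Ff (g-1) (ma k s y) (mb s y)) (fun s => mx s y)
               (fun s => Gf (g-1) (ma k s y) (mb s y)) (fun s => mbx s y)).
    apply (Ff_chain (fun s => ma k s y) (fun s => mb s y)); auto.
    apply d_ma_x; auto. apply d_mb_x; auto.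
    apply d_mx_x; auto.
    apply (Gf_chain (fun s => ma k s y) (fun s => mb s y)); auto.
    apply d_ma_x; auto. apply d_mb_x; auto.
    apply d_mbx_x; auto.
  - apply (d4m (fun s => Ff (g-1) (ma k x s) (mb x s)) (fun s => - mbx x s)
               (fun s => Gf (g-1) (ma k x s) (mb x s)) (fun s => mx x s)).
    apply (Ff_chain (fun s => ma k x s) (fun s => mb x s)); auto.
    apply d_ma_y; auto. apply d_mb_y; auto.
    apply (dneg (fun s => mbx x s)). apply d_mbx_y; auto.
    apply (Gf_chain (fun s => ma k x s) (fun s => mb x s)); auto.
    apply d_ma_y; auto. apply d_mb_y; auto.
    apply d_mx_y; auto.
  - ring.
Qed.

Lemma harm_Lf k : harmonic_on (Wk k) (fun x y => Lf (ma k x y) (mb x y)).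
Proof.
  set (A := fun x y => Lx (ma k x y) (mb x y)).
  set (T := fun x y => atan (mb x y / ma k x y)).
  set (Q := fun x y => ma k x y ^ 2 + mb x y ^ 2).
  exists (fun x y => A x y * mx x y + T x y * mbx x y),
         (fun x y => A x y * (- mbx x y) + T x y * mx x y),
         (fun x y => (- ((ma k x y * mx x y + mb x y * mbx x y) / Q x y) * mx x y + A x y * mxx x y)
                   + ((ma k x y * mbx x y - mb x y * mx x y) / Q x y * mbx x y + T x y * mbxx x y)),
         (fun x y => (- ((ma k x y * (- mbx x y) + mb x y * mx x y) / Q x y) * (- mbx x y)
                        + A x y * (- mxx x y))
                   + ((ma k x y * mx x y - mb x y * (- mbx x y)) / Q x y * mx x y
                        + T x y * (- mbxx x y))).
  intros x y [HD Ha]. unfold A, T, Q.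
  repeat split.
  - apply (Lf_chain (fun s => ma k s y) (fun s => mb s y)); auto.
    apply d_ma_x; auto. apply d_mb_x; auto.
  - apply (Lf_chain (fun s => ma k x s) (fun s => mb x s)); auto.
    apply d_ma_y; auto. apply d_mb_y; auto.
  - apply (d4p (fun s => Lx (ma k s y) (mb s y)) (fun s => mx s y)
               (fun s => atan (mb s y / ma k s y)) (fun s => mbx s y)).
    apply (Lx_chain (fun s => ma k s y) (fun s => mb s y)); auto.
    apply d_ma_x; auto. apply d_mb_x; auto.
    apply d_mx_x; auto.
    apply (dth (fun s => ma k s y) (fun s => mb s y)); auto.
    apply d_ma_x; auto. apply d_mb_x; auto.
    apply d_mbx_x; auto.
  - apply (d4p (fun s => Lx (ma k x s) (mb x s)) (fun s => - mbx x s)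
               (fun s => atan (mb x s / ma k x s)) (fun s => mx x s)).
    apply (Lx_chain (fun s => ma k x s) (fun s => mb x s)); auto.
    apply d_ma_y; auto. apply d_mb_y; auto.
    apply (dneg (fun s => mbx x s)). apply d_mbx_y; auto.
    apply (dth (fun s => ma k x s) (fun s => mb x s)); auto.
    apply d_ma_y; auto. apply d_mb_y; auto.
    apply d_mx_y; auto.
  - assert (0 < ma k x y ^ 2 + mb x y ^ 2) by nra. field. lra.
Qed.

Definition cP (f : R * R -> R) (p : R * R) := continuous f p.

Lemma cP_plus f g p : cP f p -> cP g p -> cP (fun q => f q + g q) p.
Proof. intros; apply (continuous_plus f g); auto. Qed.
Lemma cP_mult f g p : cP f p -> cP g p -> cP (fun q => f q * g q) p.
Proof. intros; apply (continuous_mult f g); auto. Qed.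
Lemma cP_opp f p : cP f p -> cP (fun q => - f q) p.
Proof. intros; apply (continuous_opp f); auto. Qed.
Lemma cP_minus f g p : cP f p -> cP g p -> cP (fun q => f q - g q) p.
Proof. intros; apply (cP_plus f (fun q => - g q)); auto; apply cP_opp; auto. Qed.
Lemma cP_const c p : cP (fun _ => c) p.
Proof. apply continuous_const. Qed.
Lemma cP_fst p : cP (fun q => fst q) p.
Proof. apply continuous_fst. Qed.
Lemma cP_snd p : cP (fun q => snd q) p.
Proof. apply continuous_snd. Qed.
Lemma cP_comp1 (f : R -> R) g p l : derivable_pt_lim f (g p) l -> cP g p -> cP (fun q => f (g q)) p.
Proof.
  intros D C. apply (continuous_comp g f); auto.
  apply (ex_derive_continuous (K:=R_AbsRing) (V:=R_NormedModule) f). exists l. apply is_derive_Reals. auto.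
Qed.
Lemma cP_pow g p n : cP g p -> cP (fun q => g q ^ n) p.
Proof. intros. apply (cP_comp1 (fun x => x ^ n) g p _ (derivable_pt_lim_pow _ n)); auto. Qed.
Lemma cP_inv g p : g p <> 0 -> cP g p -> cP (fun q => / g q) p.
Proof.
  intros. assert (D : derivable_pt_lim (fun x => / x) (g p) (- / (g p)^2)).
  { apply is_derive_Reals. auto_derive; auto. field; auto. }
  apply (cP_comp1 (fun x => / x) g p _ D); auto.
Qed.
Lemma cP_div f g p : g p <> 0 -> cP f p -> cP g p -> cP (fun q => f q / g q) p.
Proof. intros. unfold Rdiv. apply cP_mult; auto. apply cP_inv; auto. Qed.
Lemma cP_cos g p : cP g p -> cP (fun q => cos (g q)) p.
Proof. intros. apply (cP_comp1 cos g p _ (derivable_pt_lim_cos _)); auto. Qed.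
Lemma cP_sin g p : cP g p -> cP (fun q => sin (g q)) p.
Proof. intros. apply (cP_comp1 sin g p _ (derivable_pt_lim_sin _)); auto. Qed.
Lemma cP_atan g p : cP g p -> cP (fun q => atan (g q)) p.
Proof. intros. apply (cP_comp1 atan g p _ (derivable_pt_lim_atan _)); auto. Qed.
Lemma cP_ln g p : 0 < g p -> cP g p -> cP (fun q => ln (g q)) p.
Proof. intros. apply (cP_comp1 ln g p _ (derivable_pt_lim_ln _ H)); auto. Qed.
Lemma cP_Rpower g p e : 0 < g p -> cP g p -> cP (fun q => Rpower (g q) e) p.
Proof. intros. apply (cP_comp1 (fun x => Rpower x e) g p _ (derivable_pt_lim_power _ e H)); auto. Qed.

Lemma cP_ma k x y : 0 < Dd x y -> cP (fun q => ma k (fst q) (snd q)) (x, y).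
Proof.
  intros HD. unfold ma.
  apply cP_plus. apply cP_const.
  apply cP_div. simpl. lra.
  apply cP_mult. apply cP_const. apply cP_minus. apply cP_fst. apply cP_const.
  unfold Dd. apply cP_plus; apply cP_pow. apply cP_minus. apply cP_fst. apply cP_const. apply cP_snd.
Qed.
Lemma cP_mb x y : 0 < Dd x y -> cP (fun q => mb (fst q) (snd q)) (x, y).
Proof.
  intros HD. unfold mb.
  apply cP_div. simpl. lra.
  apply cP_mult. apply cP_const. apply cP_snd.
  unfold Dd. apply cP_plus; apply cP_pow. apply cP_minus. apply cP_fst. apply cP_const. apply cP_snd.
Qed.

Lemma pc_ma k x y : Wk k x y -> pc (fun x y => ma k x y) x y.
Proof. intros [HD Ha]. apply cP_ma; auto. Qed.

Lemma pc_Ff g k x y : Wk k x y -> pc (fun x y => Ff g (ma k x y) (mb x y)) x y.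
Proof.
  intros [HD Ha]. unfold pc, Ff.
  assert (A := cP_ma k x y HD). assert (B := cP_mb x y HD).
  apply (cP_mult (fun q => Rpower (ma k (fst q) (snd q) ^ 2 + mb (fst q) (snd q) ^ 2) (g / 2))).
  - apply cP_Rpower. simpl. nra. apply cP_plus; apply cP_pow; auto.
  - apply cP_cos. apply cP_mult. apply cP_const. apply cP_atan. apply cP_div; auto. simpl; lra.
Qed.

Lemma pc_Lf k x y : Wk k x y -> pc (fun x y => Lf (ma k x y) (mb x y)) x y.
Proof.
  intros [HD Ha]. unfold pc, Lf.
  assert (A := cP_ma k x y HD). assert (B := cP_mb x y HD).
  apply cP_plus.
  - apply cP_mult. apply cP_opp. apply cP_div; [simpl; lra | auto | apply cP_const].
    apply cP_ln. simpl. nra. apply cP_plus; apply cP_pow; auto.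
  - apply cP_mult. auto. apply cP_atan. apply cP_div; auto. simpl; lra.
Qed.

Lemma exp_le' x y : x <= y -> exp x <= exp y.
Proof. intros [H|H]. left; apply exp_increasing; auto. subst; lra. Qed.

Lemma ln_le' x y : 0 < x -> x <= y -> ln x <= ln y.
Proof. intros Hx [H|H]. left; apply ln_increasing; auto. subst; lra. Qed.

Lemma Rp_le_exp b e1 e2 : 0 < b <= 1 -> e2 <= e1 -> Rpower b e1 <= Rpower b e2.
Proof.
  intros [Hb Hb1] He. unfold Rpower. apply exp_le'.
  assert (ln b <= 0) by (rewrite <- ln_1; apply ln_le'; lra). nra.
Qed.

Lemma Rp_pos b e : 0 < Rpower b e.
Proof. unfold Rpower; apply exp_pos. Qed.

Lemma Rp_le_self b e : 0 < b <= 1 -> e <= 1 -> b <= Rpower b e.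
Proof. intros Hb He. rewrite <- (Rpower_1 b) at 1 by lra. apply Rp_le_exp; auto. Qed.

Lemma PI_gt3 : 3 < PI.
Proof. assert (H := PI2_3_2). lra. Qed.

Lemma cos_dec x y : 0 <= x <= y -> y <= PI -> cos y <= cos x.
Proof. intros [H1 [H2|H2]] H3. left; apply cos_decreasing_1; lra. subst; lra. Qed.

Lemma sin_inc x y : 0 <= x <= y -> y <= PI/2 -> sin x <= sin y.
Proof. intros [H1 [H2|H2]] H3. left; apply sin_increasing_1; lra. subst; lra. Qed.

Lemma trig_lt1 a phi : 0 < a < 1 -> 0 <= phi < PI/2 -> cos (a * (PI/2)) <= cos (a * phi).
Proof. intros Ha Hp. apply cos_dec; nra. Qed.

Lemma cos_half_pos a : 0 < a < 1 -> 0 < cos (a * (PI/2)).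
Proof. intros Ha. apply cos_gt_0; assert (H := PI_RGT_0); nra. Qed.

Lemma trig_log L phi : 1/2 <= L -> 0 <= phi < PI/2 -> 1/4 <= L * cos phi + phi * sin phi.
Proof.
  intros HL Hp. assert (HPI := PI_gt3).
  assert (Hc : 0 <= cos phi) by (apply cos_ge_0; lra).
  assert (Hs : 0 <= sin phi) by (apply sin_ge_0; lra).
  destruct (Rle_or_lt phi (PI/3)) as [H|H].
  - assert (cos (PI/3) <= cos phi) by (apply cos_dec; lra). rewrite cos_PI3 in H0. nra.
  - assert (sin (PI/6) <= sin phi) by (apply sin_inc; lra). rewrite sin_PI6 in H0. nra.
Qed.

Lemma trig_gam g om phi : 1 < g <= 3/2 -> 0 <= om <= 1 -> 0 <= phi < PI/2 ->
  let B := 256 / sin ((g-1) * (PI/3)) in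
  128 * om <= (B + 256) * cos phi - B * om * cos (g * phi).
Proof.
  intros Hg Hom Hp B. assert (HPI := PI_gt3).
  assert (Hsig : 0 < sin ((g-1) * (PI/3))) by (apply sin_gt_0; nra).
  assert (HB : 0 < B) by (unfold B; apply Rdiv_lt_0_compat; lra).
  assert (HBs : B * sin ((g-1) * (PI/3)) = 256) by (unfold B; field; lra).
  clearbody B.
  assert (Hc : 0 <= cos phi) by (apply cos_ge_0; lra).
  assert (Hs : 0 <= sin phi) by (apply sin_ge_0; lra).
  assert (Hs2 : 0 <= sin ((g-1)*phi)) by (apply sin_ge_0; nra).
  replace (g * phi) with (phi + (g-1)*phi) by ring. rewrite cos_plus.
  assert (Hc2 : cos ((g-1)*phi) <= 1) by apply COS_bound.
  assert (Hoc : om * cos ((g-1)*phi) <= 1) by (destruct (Rle_or_lt 0 (cos ((g-1)*phi))); nra).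
  assert (E : (B + 256) * cos phi - B * om * (cos phi * cos ((g - 1) * phi) - sin phi * sin ((g - 1) * phi))
     >= 256 * cos phi + B * om * sin phi * sin ((g-1)*phi)).
  { assert (0 <= B * cos phi * (1 - om * cos ((g-1)*phi))) by (apply Rmult_le_pos; [apply Rmult_le_pos|]; lra).
    match goal with |- ?L >= ?R => assert (L - R = B * cos phi * (1 - om * cos ((g-1)*phi))) by ring end.
    lra. }
  destruct (Rle_or_lt phi (PI/3)) as [H|H].
  - assert (H1 : cos (PI/3) <= cos phi) by (apply cos_dec; lra). rewrite cos_PI3 in H1.
    assert (0 <= B * om * sin phi * sin ((g-1)*phi)).
    { apply Rmult_le_pos; [apply Rmult_le_pos; [apply Rmult_le_pos|]|]; lra. }
    nra.
  - assert (H1 : sin (PI/6) <= sin phi) by (apply sin_inc; lra). rewrite sin_PI6 in H1.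
    assert (sin ((g-1) * (PI/3)) <= sin ((g-1)*phi)) by (apply sin_inc; nra).
    assert (B * om * sin phi * sin ((g-1)*phi) >= B * om * (1/2) * sin ((g-1) * (PI/3))).
    { apply Rle_ge. apply Rmult_le_compat.
      - apply Rmult_le_pos; [apply Rmult_le_pos|]; lra.
      - lra.
      - apply Rmult_le_compat_l; [apply Rmult_le_pos|]; lra.
      - lra. }
    nra.
Qed.

Definition Sk k x y := 64*(x^2+y^2) <= Dd x y /\ -(k/2) <= ma 0 x y.
Definition Ik x y := 256*(x^2+y^2) < Dd x y /\ 0 < ma 0 x y.
Definition qk k x y := ma k x y ^ 2 + mb x y ^ 2.

Lemma G0 x y : 64*(x^2+y^2) <= Dd x y -> 0 < Dd x y /\ x^2+y^2 <= 4/49 /\ Dd x y <= 6.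
Proof.
  unfold Dd. intros H.
  assert (H1 : 63*(x^2+y^2) + 4*x <= 4) by nra.
  assert (H2 : x^2+y^2 <= 4/49).
  { destruct (Rle_or_lt (x^2+y^2) (4/49)) as [h|h]; auto.
    assert (x < 0) by nra.
    assert (16*x^2 >= (63*(x^2+y^2) - 4)^2) by nra.
    nra. }
  split; [|split]; auto; nra.
Qed.

Lemma G4 x y : 0 < Dd x y -> ma 0 x y ^ 2 + mb x y ^ 2 = 4*(x^2+y^2)/Dd x y.
Proof. intros H. unfold ma, mb. unfold Dd in *. field. lra. Qed.

Lemma G1 k x y : Sk k x y -> cdisc (-1) 0 3 x y.
Proof. intros [H _]. destruct (G0 x y H) as [_ [H2 _]]. unfold cdisc, dist2. nra. Qed.

Lemma G2 k x y : 0 < k -> Sk k x y -> Wk k x y.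
Proof.
  intros Hk [H H']. destruct (G0 x y H) as [HD _]. split; auto.
  replace (ma k x y) with (k + ma 0 x y) by (unfold ma; ring). lra.
Qed.

Lemma G5 k x y : Sk k x y -> ma 0 x y <= 0 -> cdisc 1 0 1 x y.
Proof.
  intros [H _] Hm. destruct (G0 x y H) as [HD _].
  unfold ma in Hm. unfold cdisc, dist2. unfold Dd in *.
  assert (0 + 2 + 4 * (x - 2) / ((x - 2) ^ 2 + y ^ 2) = (2*((x-2)^2+y^2) + 4*(x-2)) / ((x - 2) ^ 2 + y ^ 2)) by (field; lra).
  rewrite H0 in Hm.
  assert (2*((x-2)^2+y^2) + 4*(x-2) <= 0).
  { destruct (Rle_or_lt (2*((x-2)^2+y^2) + 4*(x-2)) 0); auto.
    assert (0 < (2*((x-2)^2+y^2) + 4*(x-2)) / ((x - 2) ^ 2 + y ^ 2)) by (apply Rdiv_lt_0_compat; lra). lra. }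
  nra.
Qed.

Lemma G6 k x y : 0 < k <= 1/8 -> Sk k x y ->
  ma 0 x y ^ 2 + mb x y ^ 2 <= qk k x y /\ qk k x y <= 9/64.
Proof.
  intros Hk [H H']. destruct (G0 x y H) as [HD [H2 H3]].
  assert (E := G4 x y HD).
  assert (Z : ma 0 x y ^ 2 + mb x y ^ 2 <= 1/16).
  { rewrite E. apply (Rmult_le_reg_r (Dd x y)); auto. unfold Rdiv.
    rewrite Rmult_assoc, Rinv_l by lra. lra. }
  unfold qk. replace (ma k x y) with (k + ma 0 x y) by (unfold ma; ring).
  split. nra.
  assert (ma 0 x y <= 1/4) by nra. nra.
Qed.

Lemma Gid x y px py : 0 < Dd x y -> 0 < Dd px py ->
  (ma 0 x y - ma 0 px py) ^ 2 + (mb x y - mb px py) ^ 2 =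
  16 * dist2 x y px py / (Dd x y * Dd px py).
Proof. intros H1 H2. unfold ma, mb, dist2. unfold Dd in *. field. lra. Qed.

Lemma G3 k r px py x y : 0 < r -> r <= k/8 -> r <= 1/32 ->
  Ik px py -> cdisc px py r x y -> Sk k x y.
Proof.
  intros Hr Hrk Hr32 [Hp Hp'] Hc. unfold cdisc in Hc.
  assert (Hp64 : 64*(px^2+py^2) <= Dd px py) by nra.
  destruct (G0 px py Hp64) as [HDp [Hp2 HDp6]].
  assert (Hdx : (x - px)^2 <= r^2) by (unfold dist2 in Hc; pose proof (pow2_ge_0 (y - py)); lra).
  assert (Hpx : px <= 2/7) by (destruct (Rle_or_lt px (2/7)); auto; nra).
  assert (Hx : x <= px + r) by (destruct (Rle_or_lt x (px + r)); auto; nra).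
  assert (HDz : 5/2 <= Dd x y) by (unfold Dd; nra).
  assert (HDp2 : 5/2 <= Dd px py) by (unfold Dd; nra).
  assert (HDzp : 6 <= Dd x y * Dd px py) by nra.
  pose proof (Gid x y px py ltac:(lra) ltac:(lra)) as Eid.
  assert (HDel : (ma 0 x y - ma 0 px py) ^ 2 + (mb x y - mb px py) ^ 2 <= 3 * r^2).
  { rewrite Eid. apply (Rmult_le_reg_r (Dd x y * Dd px py)). lra.
    unfold Rdiv. rewrite Rmult_assoc, Rinv_l by lra. unfold dist2 in *. nra. }
  assert (Hzp : ma 0 px py ^ 2 + mb px py ^ 2 < 1/64).
  { rewrite G4 by lra. apply (Rmult_lt_reg_r (Dd px py)). lra.
    unfold Rdiv. rewrite Rmult_assoc, Rinv_l by lra. nra. }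
  split.
  - apply (Rmult_le_reg_r (/ Dd x y)). apply Rinv_0_lt_compat; lra.
    rewrite Rinv_r by lra.
    replace (64 * (x^2+y^2) * / Dd x y) with (16 * (4 * (x^2+y^2) / Dd x y)) by (unfold Rdiv; ring).
    rewrite <- G4 by lra.
    assert (Hq : ma 0 x y ^ 2 + mb x y ^ 2 <= 2 * (ma 0 px py ^ 2 + mb px py ^ 2)
              + 2 * ((ma 0 x y - ma 0 px py) ^ 2 + (mb x y - mb px py) ^ 2)).
    { pose proof (pow2_ge_0 (ma 0 x y - 2 * ma 0 px py)).
      pose proof (pow2_ge_0 (mb x y - 2 * mb px py)). nra. }
    nra.
  - assert ((ma 0 x y - ma 0 px py) ^ 2 <= 3 * r^2) by (pose proof (pow2_ge_0 (mb x y - mb px py)); lra).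
    destruct (Rle_or_lt (-(k/2)) (ma 0 x y)); auto. nra.
Qed.

Lemma G7 k s : 0 < k -> 0 < s <= 2/7 -> Sk k (-s) 0 /\ ma k (-s) 0 = k + 2*s/(s+2) /\ mb (-s) 0 = 0.
Proof.
  intros Hk Hs. unfold Sk, ma, mb, Dd.
  assert (E : (-s-2)^2 + 0^2 = (s+2)^2) by ring. rewrite E.
  assert (E2 : 4 * (- s - 2) / (s + 2) ^ 2 = - 4 / (s+2)) by (field; lra).
  rewrite E2. split; [split|split].
  - nra.
  - assert (0 + 2 + - 4 / (s + 2) = 2*s/(s+2)) by (field; lra). rewrite H.
    assert (0 < 2*s/(s+2)) by (apply Rdiv_lt_0_compat; lra). lra.
  - field. lra.
  - field. lra.
Qed.

Lemma rpow_bound a x y : 0 < a -> 0 < x^2 + y^2 ->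
  rpow (modz x y) a = Rpower (x^2+y^2) (a/2).
Proof.
  intros Ha H. unfold rpow, modz.
  assert (Hs : 0 < sqrt (x^2+y^2)) by (apply sqrt_lt_R0; auto).
  destruct (Rle_dec (sqrt (x^2+y^2)) 0); [lra|].
  rewrite <- Rpower_sqrt by auto. rewrite Rpower_mult. f_equal. field.
Qed.

Lemma core (al be k : R) (h : R -> R -> R) (U : R -> R -> Prop) (u : R -> R -> ER) :
  0 < k <= 1/8 -> 0 < be <= 2 -> be <= al ->
  harmonic_on (Wk k) h -> (forall x y, Wk k x y -> pc h x y) ->
  (forall x y, Sk k x y -> 128 * Rpower (qk k x y) (be/2) <= h x y) ->
  (forall x y, cdisc (-1) 0 3 x y -> U x y) ->
  qsh_lap_ge_m1 U u ->
  (forall x y, cdisc (-1) 0 3 x y -> ER_le (u x y) 1) ->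
  (forall x y, cdisc 1 0 1 x y -> ER_le (u x y) (rpow (modz x y) al)) ->
  forall x y, Sk k x y -> ER_le (u x y) (h x y).
Proof.
  intros Hk Hbe Hbal Hh Hpc Hlow HU Hq Hu1 Hual.
  set (r := Rmin (k/8) (1/32)).
  assert (Hr : 0 < r) by (unfold r; apply Rmin_pos; lra).
  assert (Hr1 : r <= k/8) by apply Rmin_l.
  assert (Hr2 : r <= 1/32) by apply Rmin_r.
  assert (Hq0 : forall x y, Sk k x y -> 0 < qk k x y).
  { intros x y S. destruct (G2 k x y ltac:(lra) S) as [_ Ha]. unfold qk. nra. }
  assert (Hh0 : forall x y, Sk k x y -> 0 <= h x y).
  { intros x y S. specialize (Hlow x y S). pose proof (Rp_pos (qk k x y) (be/2)). lra. }
  assert (Main := MP U (fun x y => ER_addR (u x y) ((x^2+y^2)/4)) (Sk k) Ik (Wk k) h r 2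
     Hr Hq (fun x y S => HU x y (G1 k x y S))
     (fun px py I x y C => G3 k r px py x y Hr Hr1 Hr2 I C)
     (fun x y S => G2 k x y ltac:(lra) S) Hh
     (fun x y S => Hpc x y (G2 k x y ltac:(lra) S))).
  assert (Hfin : forall x y, Sk k x y ->
            ER_le (ER_addR (u x y) ((x^2+y^2)/4)) (h x y - (x^2+y^2))).
  { apply Main.
    -
      intros x y S NI.
      destruct S as [S1 S2] eqn:ES. destruct (G0 x y S1) as [HD [HR2 HD6]].
      assert (Sxy : Sk k x y) by (split; auto).
      destruct (G6 k x y ltac:(lra) Sxy) as [Hq1 Hq2].
      assert (HP := Hlow x y Sxy). assert (Hqp := Hq0 x y Sxy).
      set (P := Rpower (qk k x y) (be/2)) in *.
      assert (HPq : qk k x y <= P) by (apply Rp_le_self; lra).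
      destruct (Rle_or_lt (ma 0 x y) 0) as [Hin|Hout1].
      +
        specialize (Hual x y (G5 k x y Sxy Hin)).
        destruct (u x y) as [w|]; simpl; auto. simpl in Hual.
        destruct (Req_dec (x^2+y^2) 0) as [Z|NZ].
        * unfold rpow, modz in Hual. rewrite Z, sqrt_0 in Hual.
          destruct (Rle_dec 0 0); [|lra]. pose proof (Hh0 x y Sxy). lra.
        * assert (R2p : 0 < x^2+y^2) by (pose proof (pow2_ge_0 x); pose proof (pow2_ge_0 y); lra).
          rewrite rpow_bound in Hual by lra.
          assert (A1 : Rpower (x^2+y^2) (al/2) <= Rpower (x^2+y^2) (be/2)) by (apply Rp_le_exp; lra).
          assert (A2 : x^2+y^2 <= Rpower (x^2+y^2) (be/2)) by (apply Rp_le_self; lra).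
          assert (A3 : x^2+y^2 <= 3/2 * qk k x y).
          { assert (E := G4 x y HD).
            assert (x^2+y^2 = (ma 0 x y ^ 2 + mb x y ^ 2) * Dd x y / 4) by (rewrite E; field; lra).
            rewrite H. apply (Rmult_le_reg_r 4). lra. unfold Rdiv.
            rewrite Rmult_assoc, Rinv_l by lra.
            pose proof (pow2_ge_0 (ma 0 x y)); pose proof (pow2_ge_0 (mb x y)). nra. }
          assert (A4 : Rpower (x^2+y^2) (be/2) <= Rpower (3/2 * qk k x y) (be/2)) by (apply Rle_Rpower_l; lra).
          rewrite <- Rpower_mult_distr in A4 by lra.
          assert (A5 : Rpower (3/2) (be/2) <= Rpower (3/2) 1) by (apply Rle_Rpower; lra).
          rewrite Rpower_1 in A5 by lra. fold P in A4.
          assert (Rpower (3/2) (be/2) * P <= 3/2 * P) by (apply Rmult_le_compat_r; lra).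
          lra.
      + destruct (Rle_or_lt (Dd x y) (256*(x^2+y^2))) as [Hout|Hin2].
        2: { exfalso. apply NI. split; auto. }
        assert (E := G4 x y HD).
        assert (1/64 <= ma 0 x y ^ 2 + mb x y ^ 2).
        { rewrite E. apply (Rmult_le_reg_r (Dd x y)). lra.
          assert (4*(x^2+y^2)/Dd x y * Dd x y = 4*(x^2+y^2)) by (field; lra). lra. }
        specialize (Hu1 x y (G1 k x y Sxy)).
        destruct (u x y) as [w|]; simpl; auto. simpl in Hu1. lra.
    - intros x y S. destruct S as [S1 S2] eqn:ES. destruct (G0 x y S1) as [HD [HR2 HD6]].
      assert (Sxy : Sk k x y) by (split; auto).
      specialize (Hu1 x y (G1 k x y Sxy)). pose proof (Hh0 x y Sxy).
      destruct (u x y) as [w|]; simpl; auto. simpl in Hu1. lra. }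
  intros x y S. specialize (Hfin x y S).
  destruct (G0 x y (proj1 S)) as [_ [HR2 _]].
  destruct (u x y) as [w|]; simpl in *; auto.
  pose proof (pow2_ge_0 x); pose proof (pow2_ge_0 y). lra.
Qed.

Lemma polar a b : 0 < a ->
  a = sqrt (a^2+b^2) * cos (Rabs (atan (b/a))) /\
  b * atan (b/a) = sqrt (a^2+b^2) * (Rabs (atan (b/a)) * sin (Rabs (atan (b/a)))) /\
  0 <= Rabs (atan (b/a)) < PI/2 /\
  (forall c, cos (c * atan (b/a)) = cos (c * Rabs (atan (b/a)))).
Proof.
  intros Ha.
  assert (Hq : 0 < sqrt (a^2+b^2)) by (apply sqrt_lt_R0; nra).
  assert (C := cos_atan_ab a b Ha). assert (S := sin_atan_ab a b Ha).
  assert (B := atan_bound (b/a)).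
  set (th := atan (b/a)) in *.
  destruct (Rle_or_lt 0 th) as [P|N].
  - rewrite Rabs_pos_eq by lra. repeat split; try lra.
    + rewrite C. field. lra.
    + rewrite S. field. lra.
  - rewrite Rabs_left by lra. repeat split; try lra.
    + rewrite cos_neg, C. field. lra.
    + rewrite sin_neg, S. field. lra.
    + intros c. replace (c * - th) with (- (c * th)) by ring. rewrite cos_neg. auto.
Qed.

Lemma Rpower_sq q : 0 < q -> Rpower q (1/2) = sqrt q.
Proof. intros. rewrite <- Rpower_sqrt by auto. f_equal. field. Qed.

Lemma LB_lt1 al k x y : 0 < al < 1 -> 0 < k <= 1/8 -> Sk k x y ->
  128 * Rpower (qk k x y) (al/2) <=
  (128 / cos (al * (PI/2))) * Ff al (ma k x y) (mb x y).
Proof.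
  intros Hal Hk S. destruct (G2 k x y ltac:(lra) S) as [HD Ha].
  assert (Hc := cos_half_pos al Hal).
  destruct (polar _ (mb x y) Ha) as [_ [_ [Hth Hcos]]].
  unfold Ff. rewrite Hcos. unfold qk.
  assert (T := trig_lt1 al _ Hal Hth).
  pose proof (Rp_pos (ma k x y ^ 2 + mb x y ^ 2) (al/2)).
  set (P := Rpower (ma k x y ^ 2 + mb x y ^ 2) (al / 2)) in *.
  assert (128 / cos (al * (PI / 2)) * (P * cos (al * (PI/2))) = 128 * P) by (field; lra).
  assert (128 / cos (al * (PI / 2)) * (P * cos (al * (PI/2))) <=
          128 / cos (al * (PI / 2)) * (P * cos (al * Rabs (atan (mb x y / ma k x y))))).
  { apply Rmult_le_compat_l. apply Rlt_le, Rdiv_lt_0_compat; lra.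
    apply Rmult_le_compat_l; lra. }
  lra.
Qed.

Lemma LB_eq1 k x y : 0 < k <= 1/8 -> Sk k x y ->
  128 * Rpower (qk k x y) (1/2) <= 512 * Lf (ma k x y) (mb x y).
Proof.
  intros Hk S. destruct (G2 k x y ltac:(lra) S) as [HD Ha].
  destruct (G6 k x y Hk S) as [_ Hq2].
  destruct (polar _ (mb x y) Ha) as [Ea [Eb [Hth _]]].
  unfold Lf. unfold qk in *.
  assert (Hq : 0 < ma k x y ^ 2 + mb x y ^ 2) by nra.
  rewrite Rpower_sq by auto.
  set (q := ma k x y ^ 2 + mb x y ^ 2) in *.
  assert (Hln : ln q <= -1).
  { assert (exp (-1) >= 1/3).
    { replace (exp (-1)) with (/ exp 1) by (rewrite <- exp_Ropp; f_equal; ring). assert (H3 := exp_le_3). assert (0 < exp 1) by apply exp_pos.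
      apply Rle_ge. apply (Rmult_le_reg_r (exp 1)); auto.
      rewrite Rinv_l by lra. lra. }
    rewrite <- (ln_exp (-1)). apply ln_le'; lra. }
  set (phi := Rabs (atan (mb x y / ma k x y))) in *.
  assert (T := trig_log (- ln q / 2) phi ltac:(lra) Hth).
  assert (Hs : 0 < sqrt q) by (apply sqrt_lt_R0; auto).
  rewrite Eb. rewrite Ea at 1.
  assert (sqrt q * (1/4) <= sqrt q * (- ln q / 2 * cos phi + phi * sin phi))
    by (apply Rmult_le_compat_l; lra).
  nra.
Qed.

Lemma LB_gt1 g k x y : 1 < g <= 3/2 -> 0 < k <= 1/8 -> Sk k x y ->
  let B := 256 / sin ((g-1) * (PI/3)) in
  128 * Rpower (qk k x y) (g/2) <= (B + 256) * ma k x y + (- B) * Ff g (ma k x y) (mb x y).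
Proof.
  intros Hg Hk S B. destruct (G2 k x y ltac:(lra) S) as [HD Ha].
  destruct (G6 k x y Hk S) as [_ Hq2].
  destruct (polar _ (mb x y) Ha) as [Ea [_ [Hth Hcos]]].
  unfold Ff. unfold qk in *. rewrite Hcos.
  assert (Hq : 0 < ma k x y ^ 2 + mb x y ^ 2) by nra.
  rewrite Rpower_half_split by auto.
  set (q := ma k x y ^ 2 + mb x y ^ 2) in *.
  set (om := Rpower q ((g-1)/2)).
  assert (Hom1 : om <= 1).
  { unfold om. apply Rle_trans with (Rpower q 0). apply Rp_le_exp; lra.
    rewrite Rpower_O by auto. lra. }
  assert (Hom0 : 0 <= om) by (unfold om; left; apply Rp_pos).
  set (phi := Rabs (atan (mb x y / ma k x y))) in *.
  assert (T := trig_gam g om phi Hg ltac:(lra) Hth). simpl in T. fold B in T.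
  assert (Hs : 0 < sqrt q) by (apply sqrt_lt_R0; auto).
  rewrite Ea at 1.
  assert (sqrt q * (128 * om) <= sqrt q * ((B + 256) * cos phi - B * om * cos (g * phi)))
    by (apply Rmult_le_compat_l; lra).
  nra.
Qed.

Lemma Ff_axis g a : 0 < a -> Ff g a 0 = Rpower a g.
Proof.
  intros Ha. unfold Ff. replace (0/a) with 0 by (field; lra). rewrite atan_0.
  rewrite Rmult_0_r, cos_0, Rmult_1_r. unfold Rpower. f_equal.
  replace (a^2+0^2) with (a*a) by ring. rewrite ln_mult by auto. field.
Qed.

Lemma Rp_scale a s g : 0 < s -> 0 < a <= 5/4 * s -> 0 < g <= 1 ->
  Rpower a g <= 5/4 * Rpower s g.
Proof.
  intros Hs Ha Hg.
  apply Rle_trans with (Rpower (5/4 * s) g). apply Rle_Rpower_l; lra.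
  rewrite <- Rpower_mult_distr by lra.
  assert (Rpower (5/4) g <= Rpower (5/4) 1) by (apply Rle_Rpower; lra).
  rewrite Rpower_1 in H by lra. pose proof (Rp_pos s g). nra.
Qed.

Definition Hyps (al : R) (U : R -> R -> Prop) (u : R -> R -> ER) :=
  (forall x y, cdisc (-1) 0 3 x y -> U x y) /\ qsh_lap_ge_m1 U u /\
  (forall x y, cdisc (-1) 0 3 x y -> ER_le (u x y) 1) /\
  (forall x y, cdisc 1 0 1 x y -> ER_le (u x y) (rpow (modz x y) al)).

Lemma far al U u s : Hyps al U u -> 0 < s <= 1/2 -> ER_le (u (-s) 0) 1.
Proof. intros [_ [_ [H _]]] Hs. apply H. unfold cdisc, dist2. nra. Qed.

Lemma case_lt1 al U u s : 0 < al < 1 -> Hyps al U u -> 0 < s <= 1/2 ->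
  ER_le (u (-s) 0) (160 / cos (al * (PI/2)) * Rpower s al).
Proof.
  intros Hal Hy Hs.
  assert (Hc := cos_half_pos al Hal). assert (Hc1 : cos (al * (PI/2)) <= 1) by apply COS_bound.
  assert (HA : 160 <= 160 / cos (al * (PI/2))).
  { apply (Rmult_le_reg_r (cos (al * (PI/2)))); auto.
    replace (160 / cos (al * (PI / 2)) * cos (al * (PI / 2))) with 160 by (field; lra). nra. }
  destruct (Rle_or_lt s (2/7)) as [Hn|Hf].
  - set (k := s/4).
    set (A := 128 / cos (al * (PI/2))).
    set (h := fun x y => A * Ff al (ma k x y) (mb x y) + 0 * Ff al (ma k x y) (mb x y)).
    destruct Hy as [HU [Hq [Hu1 Hual]]].
    assert (Hk : 0 < k <= 1/8) by (unfold k; lra).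
    destruct (G7 k s ltac:(lra) ltac:(lra)) as [St [Ea Eb]].
    assert (B1 : 0 < al <= 2) by lra. assert (B2 : al <= al) by lra.
    assert (Hlb : forall x y, Sk k x y -> 128 * Rpower (qk k x y) (al/2) <= h x y).
    { intros x y S. unfold h. pose proof (LB_lt1 al k x y Hal Hk S). fold A in H. lra. }
    assert (Hc0 := core al al k h U u Hk B1 B2
      (harm_lin _ _ _ A 0 (harm_Ff al k) (harm_Ff al k))
      (fun x y W => pc_lin _ _ A 0 x y (pc_Ff al k x y W) (pc_Ff al k x y W))
      Hlb HU Hq Hu1 Hual (-s) 0 St).
    unfold h in Hc0. rewrite Ea, Eb in Hc0.
    assert (Ha : 0 < k + 2*s/(s+2) <= 5/4 * s).
    { unfold k. assert (0 < 2*s/(s+2) <= s).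
      { split. apply Rdiv_lt_0_compat; lra.
        apply (Rmult_le_reg_r (s+2)). lra. replace (2*s/(s+2)*(s+2)) with (2*s) by (field; lra). nra. }
      lra. }
    rewrite Ff_axis in Hc0 by lra.
    assert (R := Rp_scale _ s al ltac:(lra) Ha ltac:(lra)).
    destruct (u (-s) 0); simpl in *; auto.
    assert (A * Rpower (k + 2 * s / (s + 2)) al <= A * (5/4 * Rpower s al)).
    { apply Rmult_le_compat_l; auto. unfold A. apply Rlt_le, Rdiv_lt_0_compat; lra. }
    assert (A * (5/4 * Rpower s al) = 160 / cos (al * (PI / 2)) * Rpower s al) by (unfold A; field; lra).
    lra.
  - assert (H1 := far al U u s Hy Hs).
    assert (s <= Rpower s al) by (apply Rp_le_self; lra).
    destruct (u (-s) 0); simpl in *; auto. nra.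
Qed.

Lemma a_bounds s : 0 < s <= 1/2 -> s <= s/4 + 2*s/(s+2) <= 5/4 * s.
Proof.
  intros Hs. assert (2*s/(s+2) * (s+2) = 2*s) by (field; lra).
  assert (s + 2 > 0) by lra.
  split.
  - assert (4/5 * s <= 2*s/(s+2)).
    { apply (Rmult_le_reg_r (s+2)); auto. rewrite H. nra. }
    lra.
  - assert (2*s/(s+2) <= s).
    { apply (Rmult_le_reg_r (s+2)); auto. rewrite H. nra. }
    lra.
Qed.

Lemma case_eq1 U u s : Hyps 1 U u -> 0 < s <= 1/2 ->
  ER_le (u (-s) 0) (- 640 * s * ln s).
Proof.
  intros Hy Hs.
  assert (Hls : 1 - s <= - ln s).
  { assert (E := exp_ineq1_le (ln s)). rewrite exp_ln in E by lra. lra. }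
  destruct (Rle_or_lt s (2/7)) as [Hn|Hf].
  - set (k := s/4).
    set (h := fun x y => 512 * Lf (ma k x y) (mb x y) + 0 * Lf (ma k x y) (mb x y)).
    destruct Hy as [HU [Hq [Hu1 Hual]]].
    assert (Hk : 0 < k <= 1/8) by (unfold k; lra).
    destruct (G7 k s ltac:(lra) ltac:(lra)) as [St [Ea Eb]].
    assert (B1 : 0 < 1 <= 2) by lra. assert (B2 : 1 <= 1) by lra.
    assert (Hlb : forall x y, Sk k x y -> 128 * Rpower (qk k x y) (1/2) <= h x y).
    { intros x y S. unfold h. pose proof (LB_eq1 k x y Hk S). lra. }
    assert (Hc0 := core 1 1 k h U u Hk B1 B2
      (harm_lin _ _ _ 512 0 (harm_Lf k) (harm_Lf k))
      (fun x y W => pc_lin _ _ 512 0 x y (pc_Lf k x y W) (pc_Lf k x y W))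
      Hlb HU Hq Hu1 Hual (-s) 0 St).
    unfold h in Hc0. rewrite Ea, Eb in Hc0.
    assert (Ha := a_bounds s Hs). fold k in Ha.
    set (a := k + 2 * s / (s + 2)) in *.
    assert (Lfa : Lf a 0 = - a * ln a).
    { unfold Lf. replace (a^2+0^2) with (a*a) by ring. rewrite ln_mult by lra. field. }
    rewrite Lfa in Hc0.
    assert (ln s <= ln a) by (apply ln_le'; lra).
    destruct (u (-s) 0); simpl in *; auto. nra.
  - assert (H1 := far 1 U u s Hy Hs).
    destruct (u (-s) 0); simpl in *; auto. nra.
Qed.

Lemma case_gt1 al U u s : 1 < al -> Hyps al U u -> 0 < s <= 1/2 ->
  let g := Rmin al (3/2) in
  let B := 256 / sin ((g-1) * (PI/3)) in
  ER_le (u (-s) 0) ((B + 256) * (5/4) * s).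
Proof.
  intros Hal Hy Hs g B.
  assert (Hg : 1 < g <= 3/2).
  { unfold g. split. apply Rmin_glb_lt; lra. apply Rmin_r. }
  assert (Hgal : g <= al) by apply Rmin_l.
  assert (HPI := PI_gt3).
  assert (Hsig : 0 < sin ((g-1) * (PI/3))) by (apply sin_gt_0; nra).
  assert (HB : 0 < B) by (unfold B; apply Rdiv_lt_0_compat; lra).
  destruct (Rle_or_lt s (2/7)) as [Hn|Hf].
  - set (k := s/4).
    set (h := fun x y => (B + 256) * ma k x y + (- B) * Ff g (ma k x y) (mb x y)).
    destruct Hy as [HU [Hq [Hu1 Hual]]].
    assert (Hk : 0 < k <= 1/8) by (unfold k; lra).
    destruct (G7 k s ltac:(lra) ltac:(lra)) as [St [Ea Eb]].
    assert (B1 : 0 < g <= 2) by lra.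
    assert (Hlb : forall x y, Sk k x y -> 128 * Rpower (qk k x y) (g/2) <= h x y).
    { intros x y S. unfold h. pose proof (LB_gt1 g k x y Hg Hk S). simpl in H. fold B in H. lra. }
    assert (Hc0 := core al g k h U u Hk B1 Hgal
      (harm_lin _ (fun x y => ma k x y) _ (B + 256) (- B) (harm_ma k) (harm_Ff g k))
      (fun x y W => pc_lin (fun x y => ma k x y) _ (B + 256) (- B) x y (pc_ma k x y W) (pc_Ff g k x y W))
      Hlb HU Hq Hu1 Hual (-s) 0 St).
    unfold h in Hc0. rewrite Ea, Eb in Hc0.
    assert (Ha := a_bounds s Hs). fold k in Ha.
    set (a := k + 2 * s / (s + 2)) in *.
    rewrite Ff_axis in Hc0 by lra.
    pose proof (Rp_pos a g).
    destruct (u (-s) 0); simpl in *; auto. nra.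
  - assert (H1 := far al U u s Hy Hs).
    destruct (u (-s) 0); simpl in *; auto. nra.
Qed.

Lemma origin al U u : Hyps al U u -> ER_le (u 0 0) 0.
Proof.
  intros [_ [_ [_ H]]]. assert (C : cdisc 1 0 1 0 0) by (unfold cdisc, dist2; lra).
  specialize (H 0 0 C). unfold rpow, modz in H.
  replace (0^2+0^2) with 0 in H by ring. rewrite sqrt_0 in H.
  destruct (Rle_dec 0 0); [auto|lra].
Qed.

Theorem lemma2p9 (alpha : R) (halpha : 0 < alpha) :
  exists c : R, 0 < c /\
  forall (U : R -> R -> Prop) (u : R -> R -> ER),
    (forall x y, cdisc (-1) 0 3 x y -> U x y) ->
    qsh_lap_ge_m1 U u ->
    (forall x y, cdisc (-1) 0 3 x y -> ER_le (u x y) 1) ->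
    (forall x y, cdisc 1 0 1 x y -> ER_le (u x y) (rpow (modz x y) alpha)) ->
    ER_le (u 0 0) 0 /\
    forall t : R, -1/2 <= t < 0 ->
      (alpha <> 1 -> ER_le (u t 0) (c * Rpower (Rabs t) (Rmin 1 alpha))) /\
      (alpha = 1 -> ER_le (u t 0) (- c * Rabs t * ln (Rabs t))).
Proof.
  destruct (Rlt_le_dec alpha 1) as [Hlt|Hge].
  - exists (160 / cos (alpha * (PI/2))). split.
    { apply Rdiv_lt_0_compat. lra. apply cos_half_pos; lra. }
    intros U u HU Hq Hu1 Hual.
    assert (Hy : Hyps alpha U u) by exact (conj HU (conj Hq (conj Hu1 Hual))).
    split. apply (origin alpha U u Hy).
    intros t Ht. split.
    + intros _. rewrite Rabs_left by lra. rewrite Rmin_right by lra.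
      replace t with (- (- t)) at 1 by ring.
      apply (case_lt1 alpha U u (-t)); auto; lra.
    + intros; lra.
  - destruct (Req_dec alpha 1) as [E|NE].
    + exists 640. split. lra. subst alpha.
      intros U u HU Hq Hu1 Hual.
      assert (Hy : Hyps 1 U u) by exact (conj HU (conj Hq (conj Hu1 Hual))).
      split. apply (origin 1 U u Hy).
      intros t Ht. split.
      * intros N; lra.
      * intros _. rewrite Rabs_left by lra.
        replace t with (- (- t)) at 1 by ring.
        apply (case_eq1 U u (-t)); auto; lra.
    + assert (Hal : 1 < alpha) by lra.
      set (g := Rmin alpha (3/2)).
      set (B := 256 / sin ((g-1) * (PI/3))).
      assert (HB : 0 < B).
      { assert (Hg : 1 < g <= 3/2).
        { unfold g. split. apply Rmin_glb_lt; lra. apply Rmin_r. }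
        assert (HPI := PI_gt3).
        unfold B; apply Rdiv_lt_0_compat; [lra|]. apply sin_gt_0; nra. }
      exists ((B + 256) * (5/4) ). split. nra.
      intros U u HU Hq Hu1 Hual.
      assert (Hy : Hyps alpha U u) by exact (conj HU (conj Hq (conj Hu1 Hual))).
      split. apply (origin alpha U u Hy).
      intros t Ht. split.
      * intros _. rewrite Rabs_left by lra. rewrite Rmin_left by lra.
        rewrite Rpower_1 by lra.
        replace t with (- (- t)) at 1 by ring.
        apply (case_gt1 alpha U u (-t)); auto; lra.
      * intros; lra.
Qed.
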